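(* Let $\mathcal N$ be a ReLU net with input dimension $d$, a single hidden layer of width $n$ and output dimension $1$, i.e. $f_{\mathcal N}(x)=\mathrm{ReLU}\big(b+\sum_{j=1}^n c_j\,\mathrm{ReLU}(A_j(x))\big)$ with $A_j:\mathbb{R}^d\to\mathbb{R}$ affine and $b,c_j\in\mathbb{R}$. Then there exists another ReLU net $\widetilde{\mathcal N}$ with input dimension $d$, output dimension $1$ and $n+2$ hidden layers, each of width $d+2$, that computes the same function as $\mathcal N$ on $[0,1]^d$.
   Context: For $m\geq1$, $\mathrm{ReLU}(x_1,\dots,x_m)=(\max\{0,x_1\},\dots,\max\{0,x_m\})$. A feed-forward ReLU net with input dimension $d_{\mathrm{in}}$, hidden layer width $w$, depth $n$ and output dimension $d_{\mathrm{out}}$ is a function of the form $\mathrm{ReLU}\circ A_n\circ\mathrm{ReLU}\circ A_{n-1}\circ\cdots\circ\mathrm{ReLU}\circ A_1$ with $A_1:\mathbb{R}^{d_{\mathrm{in}}}\to\mathbb{R}^w$, $A_j:\mathbb{R}^w\to\mathbb{R}^w$ ($2\leq j\leq n-1$), $A_n:\mathbb{R}^w\to\mathbb{R}^{d_{\mathrm{out}}}$ affine. Throughout, functions computed by nets are considered on the domain $[0,1]^d$. *)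

(* Defs.v *)
From mathcomp Require Import all_boot all_order all_algebra.
From mathcomp Require Import reals.
Set Implicit Arguments. Unset Strict Implicit. Unset Printing Implicit Defensive.
Import Order.TTheory GRing.Theory Num.Theory.
Local Open Scope ring_scope.

Section ReLUNets.
Variable R : realType.

Definition reluv (m : nat) (v : 'cV[R]_m) : 'cV[R]_m :=
  \col_i Num.max 0 (v i 0).

Fixpoint hidden_layers (w : nat) (Ls : seq ('M[R]_w * 'cV[R]_w))
    (h : 'cV[R]_w) : 'cV[R]_w :=
  match Ls with
  | [::] => h
  | (W, b) :: Ls' => hidden_layers Ls' (reluv (W *m h + b))
  end.

(* It has (size Ls).+1 hidden layers, each of width w, and depth (size Ls).+2. *)
Definition relu_net (din w dout : nat)
    (Win : 'M[R]_(w, din)) (bin : 'cV[R]_w)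
    (Ls : seq ('M[R]_w * 'cV[R]_w))
    (Wout : 'M[R]_(dout, w)) (bout : 'cV[R]_dout)
    (x : 'cV[R]_din) : 'cV[R]_dout :=
  reluv (Wout *m hidden_layers Ls (reluv (Win *m x + bin)) + bout).

Definition in_unit_cube (d : nat) (x : 'cV[R]_d) : Prop :=
  forall i : 'I_d, 0 <= x i 0 <= 1.

End ReLUNets.

(* Main.v *)
Require Import Defs.
From mathcomp Require Import all_boot all_order all_algebra.
From mathcomp Require Import reals.
Import Order.TTheory GRing.Theory Num.Theory.
Local Open Scope ring_scope.
Set Implicit Arguments. Unset Strict Implicit. Unset Printing Implicit Defensive.

Lemma reluv_col (R : realType) (m1 m2 : nat) (a : 'cV[R]_m1) (b : 'cV[R]_m2) :
  reluv (col_mx a b) = col_mx (reluv a) (reluv b).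
Proof.
apply/matrixP => i j; rewrite !mxE; case: splitP => k _; by rewrite !mxE.
Qed.

Lemma reluv_scal (R : realType) (t : R) :
  reluv (t%:M : 'cV[R]_1) = (Num.max 0 t)%:M.
Proof. by apply/matrixP => i j; rewrite !ord1 !mxE /= !mulr1n. Qed.

Lemma reluv_cube (R : realType) (d : nat) (x : 'cV[R]_d) :
  in_unit_cube x -> reluv x = x.
Proof.
move=> hx; apply/matrixP => i j; rewrite ord1 mxE.
by case/andP: (hx i) => h0 _; rewrite max_r.
Qed.

Definition arow (R : realType) d n (Win : 'M[R]_(n, d)) (j : nat) : 'rV[R]_d :=
  if (insub j : option 'I_n) is Some k then row k Win else 0.
Definition bscal (R : realType) n (bin : 'cV[R]_n) (j : nat) : R :=
  if (insub j : option 'I_n) is Some k then bin k 0 else 0.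
Definition cscal (R : realType) n (Wout : 'M[R]_(1, n)) (j : nat) : R :=
  if (insub j : option 'I_n) is Some k then Wout 0 k else 0.

Definition rr (R : realType) d n (Win : 'M[R]_(n, d)) (bin : 'cV[R]_n)
  (x : 'cV[R]_d) (j : nat) : R :=
  Num.max 0 ((arow Win j *m x) 0 0 + bscal bin j).

Definition TT (R : realType) d n (Win : 'M[R]_(n, d)) (bin : 'cV[R]_n)
  (Wout : 'M[R]_(1, n)) (M : R) (x : 'cV[R]_d) (k : nat) : R :=
  M + \sum_(0 <= j < k) cscal Wout j * rr Win bin x j.

Definition st (R : realType) d (t s : R) (x : 'cV[R]_d) : 'cV[R]_(1 + (1 + d)) :=
  col_mx t%:M (col_mx s%:M x).

Definition LL (R : realType) d n (Win : 'M[R]_(n, d)) (bin : 'cV[R]_n)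
  (Wout : 'M[R]_(1, n)) (k : nat) : 'M[R]_(1 + (1 + d)) * 'cV[R]_(1 + (1 + d)) :=
  (block_mx (1%:M : 'M_1) (row_mx (cscal Wout k)%:M (0 : 'M_(1, d)))
            (0 : 'M_(1 + d, 1)) (block_mx (0 : 'M_1) (arow Win k.+1) (0 : 'M_(d, 1)) 1%:M),
   col_mx (0 : 'cV_1) (col_mx (bscal bin k.+1)%:M (0 : 'cV_d))).

Lemma step (R : realType) d n (Win : 'M[R]_(n, d)) (bin : 'cV[R]_n)
  (Wout : 'M[R]_(1, n)) (M : R) (x : 'cV[R]_d) (k : nat) :
  in_unit_cube x -> 0 <= TT Win bin Wout M x k.+1 ->
  reluv ((LL Win bin Wout k).1 *m st (TT Win bin Wout M x k) (rr Win bin x k) x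
          + (LL Win bin Wout k).2)
  = st (TT Win bin Wout M x k.+1) (rr Win bin x k.+1) x.
Proof.
move=> hx hT.
rewrite /LL /st /= mul_block_col !mul_row_col mul_block_col !mul0mx !mul1mx.
rewrite !add0r !addr0 !add_col_mx !addr0 !reluv_col (reluv_cube hx).
congr col_mx; last congr col_mx.
- apply/matrixP => i j; rewrite !ord1 !mxE /= big_ord1 !mxE /= !mulr1n.
  rewrite max_r; last by move: hT; rewrite /TT big_nat_recr //= addrA.
  by rewrite /TT big_nat_recr //= addrA.
- apply/matrixP => i j; rewrite !ord1 !mxE /= !mulr1n /rr.
  by rewrite !mxE.
Qed.

Definition BB (R : realType) d n (Win : 'M[R]_(n, d)) (bin : 'cV[R]_n) (j : nat) : R :=
  `|bscal bin j| + \sum_(i < d) `|arow Win j 0 i|.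

Definition MM (R : realType) d n (Win : 'M[R]_(n, d)) (bin : 'cV[R]_n)
  (Wout : 'M[R]_(1, n)) : R :=
  \sum_(0 <= j < n.+1) `|cscal Wout j| * BB Win bin j.

Lemma rr_ge0 (R : realType) d n (Win : 'M[R]_(n, d)) (bin : 'cV[R]_n) x j :
  0 <= rr Win bin x j.
Proof. by rewrite /rr le_max lexx. Qed.

Lemma rr_le (R : realType) d n (Win : 'M[R]_(n, d)) (bin : 'cV[R]_n) x j :
  in_unit_cube x -> rr Win bin x j <= BB Win bin j.
Proof.
move=> hx; rewrite /rr /BB ge_max; apply/andP; split.
  by rewrite addr_ge0 // sumr_ge0.
apply: (le_trans (ler_norm _)); apply: (le_trans (ler_normD _ _)).
rewrite addrC lerD2l mxE; apply: (le_trans (ler_norm_sum _ _ _)).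
apply: ler_sum => i _; rewrite normrM.
case/andP: (hx i) => h0 h1.
rewrite -[X in _ <= X]mulr1; apply: ler_wpM2l => //.
by rewrite ger0_norm.
Qed.

Lemma TT_ge0 (R : realType) d n (Win : 'M[R]_(n, d)) (bin : 'cV[R]_n)
  (Wout : 'M[R]_(1, n)) x k :
  in_unit_cube x -> (k <= n.+1)%N -> 0 <= TT Win bin Wout (MM Win bin Wout) x k.
Proof.
move=> hx hk; rewrite /TT /MM (big_cat_nat (leq0n k) hk) /= addrAC.
apply: addr_ge0; last by apply: sumr_ge0 => j _; rewrite mulr_ge0 // addr_ge0 // sumr_ge0.
rewrite -big_split /=; apply: sumr_ge0 => j _.
have h : - (cscal Wout j * rr Win bin x j) <= `|cscal Wout j| * BB Win bin j.
  apply: (le_trans (ler_norm _)); rewrite normrN normrM (ger0_norm (rr_ge0 _ _ _ _)).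
  by apply: ler_wpM2l => //; apply: rr_le.
by rewrite -subr_ge0 opprK in h.
Qed.

Lemma layers (R : realType) d n (Win : 'M[R]_(n, d)) (bin : 'cV[R]_n)
  (Wout : 'M[R]_(1, n)) x m k :
  in_unit_cube x -> (k + m <= n.+1)%N ->
  hidden_layers [seq LL Win bin Wout j | j <- iota k m]
    (st (TT Win bin Wout (MM Win bin Wout) x k) (rr Win bin x k) x)
  = st (TT Win bin Wout (MM Win bin Wout) x (k + m)) (rr Win bin x (k + m)) x.
Proof.
move=> hx; elim: m k => [|m IH] k hkm; first by rewrite addn0.
rewrite /= step //; last by apply: TT_ge0 => //; rewrite -addn1; apply: leq_trans hkm; rewrite leq_add2l.
by rewrite IH ?addSnnS // -addSnnS.
Qed.

Theorem lemma3 (R : realType) (d n : nat)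
    (Win : 'M[R]_(n, d)) (bin : 'cV[R]_n)
    (Wout : 'M[R]_(1, n)) (bout : 'cV[R]_1) :
  exists (Win' : 'M[R]_(d.+2, d)) (bin' : 'cV[R]_(d.+2))
         (Ls : seq ('M[R]_(d.+2) * 'cV[R]_(d.+2)))
         (Wout' : 'M[R]_(1, d.+2)) (bout' : 'cV[R]_1),
    size Ls = n.+1 /\
    forall x : 'cV[R]_d, in_unit_cube x ->
      relu_net Win' bin' Ls Wout' bout' x = relu_net Win bin [::] Wout bout x.
Proof.
pose M := MM Win bin Wout.
exists (col_mx (0 : 'M_(1, d)) (col_mx (arow Win 0) (1%:M : 'M_d))).
exists (col_mx M%:M (col_mx (bscal bin 0)%:M (0 : 'cV_d))).
exists [seq LL Win bin Wout j | j <- iota 0 n.+1].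
exists (row_mx (1%:M : 'M_1) (0 : 'M_(1, 1 + d))).
exists ((bout 0 0 - M)%:M).
split; first by rewrite size_map size_iota.
move=> x hx; rewrite /relu_net.
have -> : reluv (col_mx (0 : 'M_(1, d)) (col_mx (arow Win 0) (1%:M : 'M_d)) *m x
   + col_mx M%:M (col_mx (bscal bin 0)%:M (0 : 'cV_d)))
   = st (TT Win bin Wout M x 0) (rr Win bin x 0) x.
  rewrite !mul_col_mx mul0mx mul1mx !add_col_mx add0r addr0 !reluv_col (reluv_cube hx).
  rewrite /st /TT big_geq // addr0; congr col_mx; last congr col_mx.
  - rewrite reluv_scal max_r //; by have := @TT_ge0 _ _ _ Win bin Wout x 0 hx (leq0n _); rewrite /TT big_geq // addr0.
  - by apply/matrixP => i j; rewrite !ord1 !mxE /= !mulr1n /rr !mxE.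
rewrite (@layers _ _ _ Win bin Wout x n.+1 0 hx (leqnn _)) /st (@mul_row_col _ 1 1 (1 + d) 1) mul1mx mul0mx addr0 add0n.
apply/matrixP => i j; rewrite !ord1 !mxE /= !mulr1n.
rewrite /TT big_nat_recr //= {2}/cscal insubN ?ltnn // mul0r addr0.
rewrite /M addrC addrA subrK addrC big_mkord; congr (Num.max 0 (_ + _)).
apply: eq_bigr => k _; rewrite /cscal /rr /arow /bscal !valK !mxE.
congr (_ * Num.max 0 (_ + _)); apply: eq_bigr => l _; by rewrite !mxE.
Qed.
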